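(* In the setting below, let $\overline S_i=S_a\times\{b\}$ and $\overline S_j=S_b\times\{c\}$ for some $1\le i,j\le\overline M$, $1\le a,b,c\le M$. Then for every bounded continuous $f:[0,\infty)\to\mathbb R$, $$\lim_{\varepsilon\downarrow0}\Big(\mathbb E f\Big(\frac{\overline T^\varepsilon(\bar x,\overline S_j)}{\overline\tau^\varepsilon_i}\Big)-\mathbb E f\Big(\frac{T^\varepsilon(y,S_b)}{\tau^\varepsilon_{ab}}\Big)\Big)=0$$ uniformly in $\bar x\in\overline S_i$, $y\in S_a$, where $\overline\tau^\varepsilon_i:=\tau^\varepsilon_{ab}$.
   Context: $S$ is a metric space partitioned into disjoint Borel sets $S_1,\dots,S_M$; for $\varepsilon>0$, $Q^\varepsilon$ is a Markov kernel from $S$ to $S\times[0,\infty)$, $P^\varepsilon(x,B)=Q^\varepsilon(x,B\times[0,\infty))$, and for $P^\varepsilon(x,B)>0$, $T^\varepsilon(x,B)$ has law $\mathbb P(T^\varepsilon(x,B)\le t)=Q^\varepsilon(x,B\times[0,t])/P^\varepsilon(x,B)$. Assumptions: $P^\varepsilon(x,S_i)=0$ for $x\in S_i$; for $i\ne j$, either $P^\varepsilon(x,S_j)=0$ for all $x\in S_i,\varepsilon$ (set $P^\varepsilon_{ij}\equiv0$) or it is positive for all $x\in S_i,\varepsilon$ and there are positive $P^\varepsilon_{ij}$ with $P^\varepsilon(x,S_j)/P^\varepsilon_{ij}\to1$ uniformly in $x\in S_i$; for $P^\varepsilon_{ij}\not\equiv0$ there are positive $\tau^\varepsilon_{ij}$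 with $\mathbb ET^\varepsilon(x,S_j)/\tau^\varepsilon_{ij}\to1$ uniformly in $x\in S_i$; and for every bounded continuous $f$ and $P^\varepsilon_{ij}\not\equiv0$, $\mathbb E f(T^\varepsilon(x_1,S_j)/\tau^\varepsilon_{ij})-\mathbb E f(T^\varepsilon(x_2,S_j)/\tau^\varepsilon_{ij})\to0$ uniformly in $x_1,x_2\in S_i$. Extended process: $\overline S=\{(x,j):x\in S_i,\ P^\varepsilon_{ij}\not\equiv0\}$ with kernel $\overline Q^\varepsilon((x,j),(A\times\{k\})\times I)=\frac{1}{P^\varepsilon(x,S_j)}\int_{A\cap S_j}P^\varepsilon(y,S_k)Q^\varepsilon(x,dy\times I)$; $\overline S$ is partitioned into the sets $S_a\times\{b\}$ with $P^\varepsilon_{ab}\not\equiv0$, re-indexed $\overline S_1,\dots,\overline S_{\overline M}$; $\overline P^\varepsilon(\bar x,B)=\overline Q^\varepsilon(\bar x,B\times[0,\infty))$, and $\overline T^\varepsilon(\bar x,B)$ has law $\overline Q^\varepsilon(\bar x,B\times\cdot)/\overline P^\varepsilon(\bar x,B)$. *)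

(* Defs.v *)
From HB Require Import structures.
From mathcomp Require Import all_boot all_order all_algebra.
From mathcomp Require Import all_classical all_reals all_analysis.
From mathcomp Require Import measurable_realfun.
Set Implicit Arguments. Unset Strict Implicit. Unset Printing Implicit Defensive.
Import Order.TTheory GRing.Theory Num.Theory.
Import numFieldNormedType.Exports.
Local Open Scope classical_set_scope.
Local Open Scope ring_scope.

(* A family of kernels indexed by eps: Q eps x is a probability measure on
   S x R, carried by S x [0,oo). *)
Definition kfam d (S : measurableType d) (R : realType) :=
  R -> S -> probability (S * R)%type R.

Section defs.
Context {d : measure_display} {S : measurableType d} {R : realType}.
Variable Q : kfam S R.

Definition Pk (eps : R) (x : S) (B : set S) : \bar R := Q eps x (B `*` setT).

(* E g(T^eps(x,B)) = (1/P^eps(x,B)) int_{B x [0,oo)} g(t) Q^eps(x, dy dt) *)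
Definition ETg (eps : R) (x : S) (B : set S) (g : R -> R) : R :=
  fine (\int[Q eps x]_(z in B `*` setT) (g z.2)%:E) / fine (Pk eps x B).

Definition meanT (eps : R) (x : S) (B : set S) : \bar R :=
  ((\int[Q eps x]_(z in B `*` setT) (z.2)%:E) * ((fine (Pk eps x B))^-1)%:E)%E.

(* Extended kernel, integrated in time against g, on the set (A x {k}) x dt,
   from the point (x, j):
   int g(t) Qbar((x,j), (A x {k}) x dt)
     = (1/P(x,S_j)) int_{(A cap S_j) x [0,oo)} g(t) P(y,S_k) Q(x, dy dt). *)
Definition Qbar_int (M : nat) (Sp : 'I_M -> set S) (eps : R) (x : S)
  (j : 'I_M) (A : set S) (k : 'I_M) (g : R -> R) : R :=
  (fine (Pk eps x (Sp j)))^-1 *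
  fine (\int[Q eps x]_(z in (A `&` Sp j) `*` setT)
          (g z.2 * fine (Pk eps z.1 (Sp k)))%:E).

Definition Pbar (M : nat) (Sp : 'I_M -> set S) (eps : R) (x : S)
  (j : 'I_M) (A : set S) (k : 'I_M) : R :=
  Qbar_int Sp eps x j A k (fun _ => 1).

Definition ETbar (M : nat) (Sp : 'I_M -> set S) (eps : R) (x : S)
  (j : 'I_M) (A : set S) (k : 'I_M) (g : R -> R) : R :=
  Qbar_int Sp eps x j A k g / Pbar Sp eps x j A k.
End defs.

Definition unif_lim0 {X : Type} {R : realType} (A : set X) (g : R -> X -> R)
  (l : R) : Prop :=
  forall delta : R, 0 < delta -> exists eps0 : R, 0 < eps0 /\
    forall eps x, 0 < eps -> eps < eps0 -> A x -> `|g eps x - l| < delta.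

(* bounded continuous functions on [0,oo) (given as functions R -> R whose
   values off [0,oo) are irrelevant) *)
Definition bdd_cont0 {R : realType} (f : R -> R) : Prop :=
  {within [set t : R | 0 <= t], continuous f} /\
  exists C : R, forall t, 0 <= t -> `|f t| <= C.

(* "P^eps_{ij} is not identically 0": P^eps(x,S_j) > 0 for all x in S_i, eps>0 *)
Definition conn_pair {d : measure_display} {S : measurableType d} {R : realType}
  (Q : kfam S R) (M : nat) (Sp : 'I_M -> set S) (i j : 'I_M) : Prop :=
  forall (eps : R) (x : S), 0 < eps -> Sp i x -> (0 < Pk Q eps x (Sp j))%E.

(* Main.v *)
Require Import Defs.
From HB Require Import structures.
From mathcomp Require Import all_boot all_order all_algebra.
From mathcomp Require Import all_classical all_reals all_analysis.
From mathcomp Require Import measurable_realfun.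
Import Order.TTheory GRing.Theory Num.Theory.
Import numFieldNormedType.Exports.
Local Open Scope classical_set_scope.
Local Open Scope ring_scope.
From mathcomp Require Import ring lra.
Section nulls.
Import HBNNSimple.
Local Open Scope ereal_scope.
Lemma nmem {T : Type} (A : set T) x : ~ A x -> x \notin A.
Proof. by move=> H; apply/negP => /set_mem. Qed.
Lemma ge0_int_null d (T : measurableType d) (R : realType)
  (mu : {measure set T -> \bar R}) (D N : set T) (F : T -> \bar R) :
  measurable N -> mu N = 0 -> (forall x, 0 <= F x) ->
  \int[mu]_(x in D) F x = \int[mu]_(x in D `\` N) F x.
Proof.
move=> mN N0 F0.
rewrite (ge0_integralE mu (fun x _ => F0 x)) (ge0_integralE mu (fun x _ => F0 x)) /=.
apply/eqP; rewrite eq_le; apply/andP; split.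
- apply: ge_ereal_sup => _ [h hle <-].
  apply: ereal_sup_ubound; exists (proj_nnsfun h (measurableC mN)).
    move=> x /=; rewrite /= mindicE.
    have := hle x.
    have [xN|xN] := pselect (N x).
      have -> : (x \in ~` N) = false by apply/negbTE/negP => /set_mem.
      by rewrite mulr0 => _; apply: erestrict_ge0.
    have -> : (x \in ~` N) = true by exact/mem_set.
    rewrite mulr1.
    have [xD|xD] := pselect (D x).
      by rewrite !patchT //; apply/mem_set => //; split.
    by rewrite !patchC //; apply: mem_set => // -[].
  rewrite -mrestrict -integral_nnsfun; last exact: measurableC.
  rewrite -integralT_nnsfun (@ge0_negligible_integral _ _ _ mu setT N) //.
  + by rewrite setTD.
  + exact/measurable_EFinP.
  + by move=> x _; rewrite lee_fin.
- apply: ge_ereal_sup => _ [h hle <-].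
  apply: ereal_sup_ubound; exists h => // x; apply: (le_trans (hle x)).
  have [xD|xD] := pselect ((D `\` N) x).
    by rewrite !patchT //; apply/mem_set => //; case: xD.
  rewrite patchC; last exact: mem_set.
  exact: erestrict_ge0.
Qed.
Lemma int_null d (T : measurableType d) (R : realType)
  (mu : {measure set T -> \bar R}) (D N : set T) (F : T -> \bar R) :
  measurable N -> mu N = 0 ->
  \int[mu]_(x in D) F x = \int[mu]_(x in D `\` N) F x.
Proof.
move=> mN N0; rewrite integralE [RHS]integralE.
by congr (_ - _); apply: ge0_int_null => // x; rewrite ?funepos_ge0 ?funeneg_ge0.
Qed.
End nulls.
Lemma alg (R : realType) (I1 I2 I3 p k K e : R) : 0 < p -> 0 < k -> 0 <= K -> 0 <= e -> e <= 1/2 ->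
  `|I1 - k* I3| <= K* k* e* p -> `|I2 - k* p| <= k* e* p -> `|I3| <= K* p ->
  `|I1/I2 - I3/p| <= 4* K* e.
Proof.
move=> p0 k0 K0 e0 e12 h1 h2 h3.
have I2lb : k * p / 2 <= I2.
  move: h2; rewrite ler_norml => /andP[h2 _].
  have : k * e * p <= k * (1/2) * p by rewrite ler_pM2r // ler_pM2l.
  lra.
have I2p : 0 < I2 by apply: lt_le_trans I2lb; rewrite divr_gt0 // mulr_gt0.
have -> : I1/I2 - I3/p = (p* (I1 - k* I3) - I3* (I2 - k* p)) / (p* I2).
  by field; apply/andP; split; rewrite gt_eqF.
rewrite normrM normfV (gtr0_norm (mulr_gt0 p0 I2p)) ler_pdivrMr ?mulr_gt0 //.
apply: (le_trans (ler_normB _ _)).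
rewrite !normrM (gtr0_norm p0).
have a1 : p * `|I1 - k * I3| <= p * (K* k* e* p) by rewrite ler_pM2l.
have a2 : `|I3| * `|I2 - k * p| <= (K* p) * (k* e* p).
  by apply: ler_pM => //; rewrite mulr_ge0 // mulr_ge0 // ltW.
have a3 : 4* K* e* (p* (k* p/2)) <= 4* K* e* (p* I2).
  by apply: ler_wpM2l; [rewrite !mulr_ge0 | rewrite ler_pM2l].
have : p * (K* k* e* p) + (K* p) * (k* e* p) = 4* K* e* (p* (k* p/2)) by field.
lra.
Qed.
Lemma int_bdd d (T : measurableType d) (R : realType) (mu : probability T R)
  (D : set T) (f : T -> R) (M : R) :
  measurable D -> measurable_fun D f -> (forall x, D x -> `|f x| <= M) ->
  mu.-integrable D (EFin \o f).
Proof.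
move=> mD mf fM; apply: measurable_bounded_integrable => //.
  by apply: (le_lt_trans (probability_le1 mu mD)); rewrite ltry.
exists M; split; first exact: num_real.
by move=> N MN x Dx; apply: (le_trans (fM x Dx)); apply: ltW.
Qed.
Lemma mneg (R : realType) : measurable [set t : R | t < 0].
Proof.
have -> : [set t : R | t < 0] = `]-oo, 0[%classic.
  by apply/seteqP; split => x /=; rewrite in_itv.
exact: measurable_itv.
Qed.
Lemma mpos (R : realType) : measurable [set t : R | 0 <= t].
Proof.
have -> : [set t : R | 0 <= t] = `[0, +oo[%classic.
  by apply/seteqP; split => x /=; rewrite in_itv /= andbT.
exact: measurable_itv.
Qed.
Lemma core d (S : measurableType d) (R : realType) (mu : probability (S * R)%type R)
  (B : set S) (w : S -> R) (g : R -> R) (K k e : R) :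
  measurable B -> mu (setT `*` [set t : R | t < 0]) = 0%E ->
  measurable_fun setT w -> measurable_fun [set t : R | 0 <= t] g ->
  (forall t, 0 <= t -> `|g t| <= K) ->
  0 < fine (mu (B `*` setT)) -> 0 < k -> 0 <= e -> e <= 1/2 ->
  (forall y, B y -> `|w y - k| <= k * e) ->
  `| (\int[mu]_(z in B `*` setT) (g z.2 * w z.1)) / (\int[mu]_(z in B `*` setT) (w z.1))
     - (\int[mu]_(z in B `*` setT) (g z.2)) / fine (mu (B `*` setT)) | <= 4 * K * e.
Proof.
move=> mB N0 mw mg gK p0 k0 e0 e12 wk.
have K0 : 0 <= K by apply: le_trans (gK 0 (lexx 0)).
set D := B `*` setT; set N := (setT `*` [set t : R | t < 0]) in N0 *.
have mN : measurable N by apply: measurableX => //; exact: mneg.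
have mD : measurable D by apply: measurableX.
have mD' : measurable (D `\` N) by exact: measurableD.
have eqR (F : S * R -> R) : \int[mu]_(z in D) F z = \int[mu]_(z in D `\` N) F z.
  by rewrite /Rintegral (@int_null _ _ _ mu _ _ _ mN N0).
set p := fine (mu D).
have pE : fine (mu (D `\` N)) = p.
  have := Rintegral_cst mu mD 1; rewrite eqR Rintegral_cst // !mul1r => ->.
  by [].
have D'E z : (D `\` N) z -> B z.1 /\ 0 <= z.2.
  case: z => y t [[By _]] /= H; split => //; rewrite leNgt; apply/negP => tn.
  by apply: H; split.
have mG : measurable_fun (D `\` N) (fun z : S * R => g z.2).
  apply: (measurable_comp (mpos R)) => //.
    by move=> _ [z /D'E [_ z2] <-].
  exact: measurable_funTS.
have mW : measurable_fun (D `\` N) (fun z : S * R => w z.1).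
  by apply: measurable_funTS; apply: measurableT_comp.
have GK z : (D `\` N) z -> `|g z.2| <= K by move=> /D'E [_ /gK].
have Wk z : (D `\` N) z -> `|w z.1 - k| <= k * e by move=> /D'E [/wk].
have W1 z : (D `\` N) z -> `|w z.1| <= k * e + k.
  move=> /Wk H; have := ler_normD (w z.1 - k) k; rewrite subrK (gtr0_norm k0).
  by move=> /le_trans; apply; rewrite lerD2r.
have iG := @int_bdd _ _ _ mu _ _ _ mD' mG GK.
have iW := @int_bdd _ _ _ mu _ _ _ mD' mW W1.
have iGW : mu.-integrable (D `\` N) (EFin \o (fun z : S * R => g z.2 * w z.1)).
  apply: (@int_bdd _ _ _ mu _ _ (K * (k * e + k)) mD').
    exact: measurable_funM.
  by move=> z Dz; rewrite normrM; apply: ler_pM => //; [exact: GK|exact: W1].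
have ic (r : R) : mu.-integrable (D `\` N) (EFin \o (fun _ : S * R => r)).
  by apply: (@int_bdd _ _ _ mu _ _ (`|r|) mD').
rewrite !eqR -pE.
have bnd (F : S * R -> R) (c : R) : mu.-integrable (D `\` N) (EFin \o F) ->
    (forall z, (D `\` N) z -> `|F z| <= c) ->
    `|\int[mu]_(z in D `\` N) F z| <= c * fine (mu (D `\` N)).
  move=> iF Fc; apply: (le_trans (le_normr_Rintegral mD' iF)).
  rewrite -Rintegral_cst //; apply: le_Rintegral => //.
  exact: integrable_norm.
have ikG : mu.-integrable (D `\` N) (EFin \o (fun z : S * R => k * g z.2)).
  apply: (@int_bdd _ _ _ mu _ _ (`|k| * K) mD').
    by apply: measurable_funM => //; exact: measurable_cst.
  by move=> z Dz; rewrite normrM; apply: ler_wpM2l => //; exact: GK.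
apply: (@alg R _ _ _ _ k) => //.

- by rewrite pE.
- rewrite -RintegralZl // -RintegralB // (_ : K * k * e = K * (k * e)) ?mulrA //; apply: bnd.
    by apply: (@int_bdd _ _ _ mu _ _ (K * (k * e + k) + `|k| * K) mD') => [|z Dz];
      [apply: measurable_funB; apply: measurable_funM => //; exact: measurable_cst
      |apply: (le_trans (ler_normB _ _)); rewrite !normrM; apply: lerD;
        [apply: ler_pM => //; [exact: GK|exact: W1]|rewrite ler_wpM2l //; exact: GK]].
  move=> z Dz; rewrite (mulrC k) -mulrBr normrM -mulrA; apply: ler_pM => //; [exact: GK|exact: Wk].
- rewrite -Rintegral_cst // -RintegralB //; apply: bnd.
    by apply: (@int_bdd _ _ _ mu _ _ (k * e + k + `|k|) mD') => [|z Dz];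
      [apply: measurable_funB => //; exact: measurable_cst
      |apply: (le_trans (ler_normB _ _)); apply: lerD => //; exact: W1].
  exact: Wk.
- exact: bnd.
Qed.
Theorem lemma4p2 (d : measure_display) (S : measurableType d) (R : realType)
  (M : nat) (Sp : 'I_M -> set S)
  (Sp_meas : forall i, measurable (Sp i))
  (Sp_disj : forall i j, i != j -> Sp i `&` Sp j = set0)
  (Sp_cover : forall x, exists i, Sp i x)
  (Q : kfam S R)
  (Q_meas : forall eps : R, 0 < eps -> forall A : set (S * R)%type, measurable A ->
     measurable_fun setT (fun x : S => Q eps x A))
  (Q_time : forall (eps : R) x, 0 < eps ->
     Q eps x (setT `*` [set t : R | t < 0]) = 0%E)
  (Pij tau : 'I_M -> 'I_M -> R -> R)
  (H_self : forall (eps : R) i x, 0 < eps -> Sp i x -> Pk Q eps x (Sp i) = 0%E)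
  (H_dich : forall i j, i != j ->
     (forall (eps : R) x, 0 < eps -> Sp i x -> Pk Q eps x (Sp j) = 0%E)
     \/ conn_pair Q Sp i j)
  (H_P : forall i j, i != j -> conn_pair Q Sp i j ->
     (forall eps : R, 0 < eps -> 0 < Pij i j eps) /\
     unif_lim0 (Sp i) (fun eps x => fine (Pk Q eps x (Sp j)) / Pij i j eps) 1)
  (H_tau : forall i j, i != j -> conn_pair Q Sp i j ->
     (forall eps : R, 0 < eps -> 0 < tau i j eps) /\
     (forall delta : R, 0 < delta -> exists eps0 : R, 0 < eps0 /\
        forall eps x, 0 < eps -> eps < eps0 -> Sp i x ->
          (`| meanT Q eps x (Sp j) * ((tau i j eps)^-1)%:E - 1 | < delta%:E)%E))
  (H_f : forall i j, i != j -> conn_pair Q Sp i j ->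
     forall f : R -> R, bdd_cont0 f ->
     unif_lim0 (Sp i `*` Sp i)
       (fun eps p => ETg Q eps p.1 (Sp j) (fun t => f (t / tau i j eps))
                   - ETg Q eps p.2 (Sp j) (fun t => f (t / tau i j eps))) 0)
  (a b c : 'I_M) (Hab : conn_pair Q Sp a b) (Hbc : conn_pair Q Sp b c)
  (f : R -> R) (hf : bdd_cont0 f) :
  unif_lim0 (Sp a `*` Sp a)
    (fun eps p =>
       ETbar Q Sp eps p.1 b (Sp b) c (fun t => f (t / tau a b eps))
     - ETg Q eps p.2 (Sp b) (fun t => f (t / tau a b eps))) 0.
Proof.
have hf' := hf.
case: hf => fc [C fC].
move=> delta dpos.
have [[x0 ax0]|na] := pselect (exists x, Sp a x); last first.
  by exists 1; split => // eps [x1 x2] _ _ [ax1 _]; exfalso; apply: na; exists x1.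
have ab : a != b.
  apply/eqP => ab; subst b; have := Hab 1 x0 ltr01 ax0.
  by rewrite H_self // ltxx.
have [[y0 by0]|nb] := pselect (exists y, Sp b y); last first.
  have := Hab 1 x0 ltr01 ax0; rewrite /Pk.
  have -> : Sp b = set0 by apply/seteqP; split => // y by0; apply: nb; exists y.
  by rewrite set0X measure0 ltxx.
have bc : b != c.
  apply/eqP => bc; subst c; have := Hbc 1 y0 ltr01 by0.
  by rewrite H_self // ltxx.
have [Pp Hconv] := H_P b c bc Hbc.
have [taup _] := H_tau a b ab Hab.
have Hf := H_f a b ab Hab f hf'.
have C0 : 0 <= C by apply: le_trans (fC 0 (lexx 0)).
set d1 := Num.min (1/2) (delta / (8 * (C + 1))).
have d1p : 0 < d1 by rewrite lt_min divr_gt0 //= ?divr_gt0 // mulr_gt0 // ltr_wpDl.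
have d1h : d1 <= 1/2 by rewrite ge_min lexx.
have d1d : d1 <= delta / (8 * (C + 1)) by rewrite ge_min lexx orbT.
have [e1 [e1p He1]] := Hconv d1 d1p.
have [e2 [e2p He2]] := Hf (delta / 2) (divr_gt0 dpos (ltr0n _ 2)).
exists (Num.min e1 e2); split; first by rewrite lt_min e1p.
move=> eps [x1 x2] epsp; rewrite lt_min => /andP[ee1 ee2] [/= ax1 ax2].
rewrite subr0.
set Tb := ETbar _ _ _ _ _ _ _ _.
set T2 := ETg _ _ x2 _ _.
set T1 := ETg Q eps x1 (Sp b) (fun t => f (t / tau a b eps)).
have -> : Tb - T2 = (Tb - T1) + (T1 - T2) by rewrite addrA subrK.
apply: (le_lt_trans (ler_normD _ _)).
have h2 : `|T1 - T2| < delta / 2.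
  by have := He2 eps (x1, x2) epsp ee2 (conj ax1 ax2); rewrite subr0.
suff h1 : `|Tb - T1| <= delta / 2.
  by apply: (le_lt_trans (lerD h1 (lexx _))); rewrite [X in _ < X](splitr delta) ltrD2l.
have mSb : measurable (Sp b `*` @setT R) by apply: measurableX.
have pb : 0 < fine (Q eps x1 (Sp b `*` setT)).
  apply: fine_gt0; apply/andP; split; first exact: (Hab eps x1 epsp ax1).
  by apply: (le_lt_trans (probability_le1 _ mSb)); rewrite ltry.
have -> : Tb = (\int[Q eps x1]_(z in Sp b `*` setT)
     (f (z.2 / tau a b eps) * fine (Pk Q eps z.1 (Sp c)))) /
   (\int[Q eps x1]_(z in Sp b `*` setT) (fine (Pk Q eps z.1 (Sp c)))).
  rewrite /Tb /ETbar /Pbar /Qbar_int setIid /=.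
  have -> : (\int[Q eps x1]_(z in Sp b `*` [set: R]) (1 * fine (Pk Q eps z.1 (Sp c)))%:E
    = \int[Q eps x1]_(z in Sp b `*` [set: R]) (fine (Pk Q eps z.1 (Sp c)))%:E)%E.
    by apply: eq_integral => z _; rewrite mul1r.
  by rewrite invfM invrK mulrACA mulVf ?mul1r // gt_eqF.
have taue := taup eps epsp.
apply: le_trans.
  apply: (@core _ _ _ (Q eps x1) (Sp b) (fun y => fine (Pk Q eps y (Sp c)))
     (fun t => f (t / tau a b eps)) C (Pij b c eps) d1) => //.
  - exact: Q_time.
  - apply: measurableT_comp; first exact: fine_measurable.
    apply: Q_meas => //; exact: measurableX.
  - apply: (measurable_comp (mpos R)) => //.
      by move=> _ [t /= t0 <-]; rewrite divr_ge0 // ltW.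
    apply: (subspace_continuous_measurable_fun (mpos R)) => //.
    apply: measurable_funM => //; exact: measurable_cst.
  - by move=> t t0; apply: fC; rewrite divr_ge0 // ltW.
  - exact: Pp.
  - exact: ltW.
  - move=> y by1; have := He1 eps y epsp ee1 by1.
    have kp := Pp eps epsp.
    have -> : fine (Pk Q eps y (Sp c)) - Pij b c eps =
      Pij b c eps * (fine (Pk Q eps y (Sp c)) / Pij b c eps - 1).
      by field; rewrite gt_eqF.
    by rewrite normrM gtr0_norm // => /ltW H; rewrite ler_pM2l.
apply: (le_trans (ler_wpM2l _ d1d)); first by rewrite mulr_ge0.
have -> : 4 * C * (delta / (8 * (C + 1))) = (delta / 2) * (C / (C + 1)).
  by field; rewrite gt_eqF // ltr_wpDl.
apply: ler_piMr; first by rewrite divr_ge0 // ltW.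
by rewrite ler_pdivrMr ?ltr_wpDl // mul1r lerDl.
Qed.
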